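(* Let $\mathcal U=\{(\alpha,d): \alpha\in(0,1),\ d\in\mathcal D_\alpha\}$. Then $\mathcal U$ is a biconvex set (each slice $\{d:(\alpha,d)\in\mathcal U\}$ for fixed $\alpha$ and each slice $\{\alpha:(\alpha,d)\in\mathcal U\}$ for fixed $d$ is convex), $f_0^*>0$ on $\mathcal U$, and $\ln f_0^*$ is strictly biconcave on $\mathcal U$: for each fixed $\alpha$, $d\mapsto \ln f_0^*(\alpha,d)$ is strictly concave on its slice, and for each fixed $d$, $\alpha\mapsto \ln f_0^*(\alpha,d)$ is strictly concave on its slice.
   Context: All parameters $s_{\rm in},\gamma,\beta,\varphi_{\max},k_s,\rho_{\max},k_v,q_{\min},\mu_{\max}$ are strictly positive. $\varphi(s)=\frac{\varphi_{\max}s}{k_s+s}$, $\rho(v)=\frac{\rho_{\max}v}{k_v+v}$, $\mu(q)=\mu_{\max}(1-q_{\min}/q)$, with inverses $\varphi^{-1}:[0,\varphi_{\max})\to[0,\infty)$, $\mu^{-1}:[0,\mu_{\max})\to[q_{\min},\infty)$, $\rho^{-1}:[0,\rho_{\max})\to[0,\infty)$. $\psi_{\max}=\frac{\mu_{\max}\rho_{\max}}{\rho_{\max}+q_{\min}\mu_{\max}}$, $\psi^{-1}(y)=\rho^{-1}(y\,\mu^{-1}(y))$ for $y\in[0,\psi_{\max})$. For $\alpha\in(0,1)$: $\psi_\alpha^{-1}(d)=\varphi^{-1}(d/(1-\alpha))+\psi^{-1}(d)/(\alpha\beta\gamma)$ and $\mathcal{D}_\alpha=\{d\in(0,\min\{(1-\alpha)\varphi_{\max},\psi_{\max}\}):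 \psi_\alpha^{-1}(d)<s_{\rm in}\}$. $f_0^*(\alpha,d)=\frac{d\,(v_{\rm in}^*(\alpha,d)-\psi^{-1}(d))}{\mu^{-1}(d)}$ with $v_{\rm in}^*(\alpha,d)=\alpha\beta\gamma\big(s_{\rm in}-\varphi^{-1}(d/(1-\alpha))\big)$. *)

(* Defs.v *)
From Stdlib Require Import Reals Lra.
Open Scope R_scope.

Record params := Params {
  s_in : R; gam : R; bet : R; phi_max : R; k_s : R;
  rho_max : R; k_v : R; q_min : R; mu_max : R }.

Definition params_pos (p : params) : Prop :=
  0 < s_in p /\ 0 < gam p /\ 0 < bet p /\ 0 < phi_max p /\ 0 < k_s p /\
  0 < rho_max p /\ 0 < k_v p /\ 0 < q_min p /\ 0 < mu_max p.

Definition phi (p : params) (s : R) : R := phi_max p * s / (k_s p + s).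
Definition rho (p : params) (v : R) : R := rho_max p * v / (k_v p + v).
Definition mu  (p : params) (q : R) : R := mu_max p * (1 - q_min p / q).

(* Their inverses, written out explicitly:
   phi^{-1} : [0,phi_max) -> [0,oo),  y |-> k_s y / (phi_max - y)
   mu^{-1}  : [0,mu_max)  -> [q_min,oo), y |-> q_min mu_max / (mu_max - y)
   rho^{-1} : [0,rho_max) -> [0,oo),  y |-> k_v y / (rho_max - y) *)
Definition phi_inv (p : params) (y : R) : R := k_s p * y / (phi_max p - y).
Definition mu_inv  (p : params) (y : R) : R := q_min p * mu_max p / (mu_max p - y).
Definition rho_inv (p : params) (y : R) : R := k_v p * y / (rho_max p - y).

Definition psi_max (p : params) : R :=
  mu_max p * rho_max p / (rho_max p + q_min p * mu_max p).

Definition psi_inv (p : params) (y : R) : R := rho_inv p (y * mu_inv p y).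

Definition psi_alpha_inv (p : params) (a d : R) : R :=
  phi_inv p (d / (1 - a)) + psi_inv p d / (a * bet p * gam p).

Definition in_D (p : params) (a d : R) : Prop :=
  0 < d /\ d < Rmin ((1 - a) * phi_max p) (psi_max p) /\ psi_alpha_inv p a d < s_in p.

Definition in_U (p : params) (a d : R) : Prop := 0 < a < 1 /\ in_D p a d.

Definition v_in_star (p : params) (a d : R) : R :=
  a * bet p * gam p * (s_in p - phi_inv p (d / (1 - a))).

Definition f0_star (p : params) (a d : R) : R :=
  d * (v_in_star p a d - psi_inv p d) / mu_inv p d.

Definition convex_set (S : R -> Prop) : Prop :=
  forall x y t, S x -> S y -> 0 <= t <= 1 -> S (t * x + (1 - t) * y).

Definition strictly_concave_on (S : R -> Prop) (f : R -> R) : Prop :=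
  forall x y t, S x -> S y -> x <> y -> 0 < t < 1 ->
    t * f x + (1 - t) * f y < f (t * x + (1 - t) * y).

(* Main.v *)
Require Import Defs.
From Stdlib Require Import Reals Lra.
Open Scope R_scope.

Lemma ln_le' x y : 0 < x -> x <= y -> ln x <= ln y.
Proof. intros Hx [H|H]. left; apply ln_increasing; lra. subst; lra. Qed.

Lemma ln_le_sub1 z : 0 < z -> ln z <= z - 1.
Proof. intros Hz. pose proof (exp_ineq1_le (ln z)). rewrite exp_ln in H; lra. Qed.

Lemma ln_lt_sub1 z : 0 < z -> z <> 1 -> ln z < z - 1.
Proof. intros Hz H1. pose proof (exp_ineq1 (ln z) (ln_neq_0 z H1 Hz)). rewrite exp_ln in H; lra. Qed.

Lemma ln_div' x y : 0 < x -> 0 < y -> ln (x / y) = ln x - ln y.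
Proof. intros. unfold Rdiv. rewrite ln_mult, ln_Rinv; try lra. apply Rinv_0_lt_compat; lra. Qed.

Lemma mix_pos x y t : 0 < x -> 0 < y -> 0 <= t <= 1 -> 0 < t*x+(1-t)*y.
Proof. intros. destruct (Req_dec t 0). subst; lra. nra. Qed.

Lemma mix_lt x y u t : x < u -> y < u -> 0 <= t <= 1 -> t*x+(1-t)*y < u.
Proof. intros. assert (0 < t*(u-x)+(1-t)*(u-y)) by (apply mix_pos; lra). nra. Qed.

Lemma ln_cc x y t : 0 < x -> 0 < y -> 0 <= t <= 1 ->
  t * ln x + (1-t) * ln y <= ln (t*x+(1-t)*y).
Proof.
  intros Hx Hy Ht. set (m := t*x+(1-t)*y). assert (Hm : 0 < m) by (apply mix_pos; lra).
  pose proof (ln_le_sub1 (x/m) ltac:(apply Rdiv_lt_0_compat; lra)).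
  pose proof (ln_le_sub1 (y/m) ltac:(apply Rdiv_lt_0_compat; lra)).
  rewrite ln_div' in H, H0 by lra.
  assert (E : t*(x/m-1)+(1-t)*(y/m-1) = 0) by (unfold m in *; field; lra).
  apply (Rmult_le_compat_l t) in H; [|lra]. apply (Rmult_le_compat_l (1-t)) in H0; [|lra].
  lra.
Qed.

Lemma ln_scc x y t : 0 < x -> 0 < y -> x <> y -> 0 < t < 1 ->
  t * ln x + (1-t) * ln y < ln (t*x+(1-t)*y).
Proof.
  intros Hx Hy Hxy Ht. set (m := t*x+(1-t)*y). assert (Hm : 0 < m) by (apply mix_pos; lra).
  assert (Hxm : x/m <> 1).
  { intro E. assert (x = m) by (apply (Rmult_eq_reg_r (/m)); [| apply Rinv_neq_0_compat; lra];
      unfold Rdiv in E; rewrite E; field; lra). unfold m in H. apply Hxy. nra. }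
  pose proof (ln_lt_sub1 (x/m) ltac:(apply Rdiv_lt_0_compat; lra) Hxm).
  pose proof (ln_le_sub1 (y/m) ltac:(apply Rdiv_lt_0_compat; lra)).
  rewrite ln_div' in H, H0 by lra.
  assert (E : t*(x/m-1)+(1-t)*(y/m-1) = 0) by (unfold m in *; field; lra).
  apply (Rmult_lt_compat_l t) in H; [|lra]. apply (Rmult_le_compat_l (1-t)) in H0; [|lra].
  lra.
Qed.

Lemma cvx_inv K z1 z2 t : 0 <= K -> 0 < z1 -> 0 < z2 -> 0 <= t <= 1 ->
  K / (t*z1+(1-t)*z2) <= t*(K/z1) + (1-t)*(K/z2).
Proof.
  intros. assert (Hm : 0 < t*z1+(1-t)*z2) by (apply mix_pos; lra).
  assert (E : t*(K/z1) + (1-t)*(K/z2) - K / (t*z1+(1-t)*z2)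
     = K*t*(1-t)*(z1-z2)^2 / (z1*z2*(t*z1+(1-t)*z2))) by (field; repeat split; lra).
  assert (0 <= K*t*(1-t)*(z1-z2)^2 / (z1*z2*(t*z1+(1-t)*z2))).
  { apply Rmult_le_pos. apply Rmult_le_pos. apply Rmult_le_pos. nra. lra. apply pow2_ge_0.
    left; apply Rinv_0_lt_compat. apply Rmult_lt_0_compat; [apply Rmult_lt_0_compat|]; lra. }
  lra.
Qed.

Lemma cvx_frac K c x y t : 0 <= K -> 0 <= c -> x < c -> y < c -> 0 <= t <= 1 ->
  K*(t*x+(1-t)*y)/(c-(t*x+(1-t)*y)) <= t*(K*x/(c-x)) + (1-t)*(K*y/(c-y)).
Proof.
  intros. pose proof (cvx_inv (K*c) (c-x) (c-y) t ltac:(nra) ltac:(lra) ltac:(lra) H3).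
  replace (c - (t*x+(1-t)*y)) with (t*(c-x)+(1-t)*(c-y)) by ring.
  assert (0 < t*(c-x)+(1-t)*(c-y)) by (apply mix_pos; lra).
  assert (E1: K*(t*x+(1-t)*y)/(t*(c-x)+(1-t)*(c-y)) = K*c/(t*(c-x)+(1-t)*(c-y)) - K) by (field; repeat split; lra).
  assert (E2: K*x/(c-x) = K*c/(c-x) - K) by (field; repeat split; lra).
  assert (E3: K*y/(c-y) = K*c/(c-y) - K) by (field; repeat split; lra).
  rewrite E1, E2, E3. lra.
Qed.

Lemma scvx_q pm d x y t : 0 < pm -> d < pm -> 0 < (1-x)*pm - d -> 0 < (1-y)*pm - d -> x <> y -> 0 < t < 1 ->
  (t*x+(1-t)*y)/((1-(t*x+(1-t)*y))*pm - d) < t*(x/((1-x)*pm-d)) + (1-t)*(y/((1-y)*pm-d)).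
Proof.
  intros. set (m := t*x+(1-t)*y).
  assert (Hm : 0 < (1-m)*pm - d).
  { replace ((1-m)*pm-d) with (t*((1-x)*pm-d)+(1-t)*((1-y)*pm-d)) by (unfold m; ring).
    apply mix_pos; lra. }
  assert (E : t*(x/((1-x)*pm-d)) + (1-t)*(y/((1-y)*pm-d)) - m/((1-m)*pm - d)
     = (pm-d)*pm*t*(1-t)*(x-y)^2 / (((1-x)*pm-d)*((1-y)*pm-d)*((1-m)*pm-d))).
  { unfold m in *. field. repeat split; lra. }
  assert (0 < (pm-d)*pm*t*(1-t)*(x-y)^2 / (((1-x)*pm-d)*((1-y)*pm-d)*((1-m)*pm-d))).
  { apply Rdiv_lt_0_compat. apply Rmult_lt_0_compat. apply Rmult_lt_0_compat. apply Rmult_lt_0_compat.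
    apply Rmult_lt_0_compat; lra. lra. lra. assert (x - y <> 0) by lra. nra.
    apply Rmult_lt_0_compat; [apply Rmult_lt_0_compat|]; lra. }
  lra.
Qed.

Definition Kp p := k_v p * q_min p * mu_max p / (rho_max p + q_min p * mu_max p).
Definition G p a d := v_in_star p a d - psi_inv p d.

Lemma phi_inv_eq p a d : params_pos p -> a < 1 -> d < (1-a)*phi_max p ->
  phi_inv p (d/(1-a)) = k_s p * d / ((1-a)*phi_max p - d).
Proof. intros Hp Ha Hd. unfold phi_inv. field. split; lra. Qed.

Lemma psi_max_lt p : params_pos p -> 0 < psi_max p < mu_max p.
Proof.
  intros (H1&H2&H3&H4&H5&H6&H7&H8&H9). unfold psi_max.
  assert (HL : 0 < rho_max p + q_min p * mu_max p) by (pose proof (Rmult_lt_0_compat _ _ H8 H9); lra).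
  split. apply Rdiv_lt_0_compat; [apply Rmult_lt_0_compat|]; lra.
  apply (Rmult_lt_reg_r (rho_max p + q_min p * mu_max p)). lra.
  unfold Rdiv. rewrite Rmult_assoc, Rinv_l by lra.
  pose proof (Rmult_lt_0_compat _ _ H9 (Rmult_lt_0_compat _ _ H8 H9)). nra.
Qed.

Lemma psi_inv_eq p d : params_pos p -> d < psi_max p ->
  psi_inv p d = Kp p * d / (psi_max p - d).
Proof.
  intros Hp Hd. pose proof (psi_max_lt p Hp).
  destruct Hp as (H1&H2&H3&H4&H5&H6&H7&H8&H9).
  assert (HL : 0 < rho_max p + q_min p * mu_max p) by (pose proof (Rmult_lt_0_compat _ _ H8 H9); lra).
  assert (HP : mu_max p * rho_max p - d * (rho_max p + q_min p * mu_max p) > 0).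
  { unfold psi_max in Hd. apply (Rmult_lt_compat_r (rho_max p + q_min p * mu_max p)) in Hd; [|lra].
    unfold Rdiv in Hd. rewrite Rmult_assoc, Rinv_l in Hd by lra. lra. }
  unfold psi_inv, rho_inv, mu_inv, Kp, psi_max. field. repeat split; try lra.
Qed.

Definition Phi p a d := k_s p * d / ((1-a)*phi_max p - d) + (Kp p * d / (psi_max p - d)) / (a * bet p * gam p).

Lemma in_U_iff p a d : params_pos p -> in_U p a d <->
  (0 < a < 1 /\ 0 < d /\ d < (1-a)*phi_max p /\ d < psi_max p /\ Phi p a d < s_in p).
Proof.
  intros Hp. unfold in_U, in_D, psi_alpha_inv, Phi. split.
  - intros (Ha & Hd & Hm & Hs). pose proof (Rmin_l ((1 - a) * phi_max p) (psi_max p)).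
    pose proof (Rmin_r ((1 - a) * phi_max p) (psi_max p)).
    rewrite phi_inv_eq, psi_inv_eq in Hs by (auto; lra). repeat split; lra.
  - intros (Ha & Hd & H1 & H2 & Hs). rewrite phi_inv_eq, psi_inv_eq by (auto; lra).
    repeat split; try lra. apply Rmin_glb_lt; lra.
Qed.

Lemma G_eq p a d : params_pos p -> in_U p a d ->
  G p a d = a * bet p * gam p * s_in p - bet p * gam p * k_s p * d * (a / ((1-a)*phi_max p - d))
            - Kp p * d / (psi_max p - d).
Proof.
  intros Hp HU. pose proof HU as HU'. apply in_U_iff in HU'; auto. destruct HU' as (Ha&Hd&H1&H2&Hs).
  unfold G, v_in_star. rewrite phi_inv_eq, psi_inv_eq by (auto; lra). unfold Rdiv. ring.
Qed.

Lemma G_pos p a d : params_pos p -> in_U p a d -> 0 < G p a d.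
Proof.
  intros Hp HU. pose proof HU as HU'. apply in_U_iff in HU'; auto. destruct HU' as (Ha&Hd&H1&H2&Hs).
  pose proof Hp as (P1&P2&P3&P4&P5&P6&P7&P8&P9).
  unfold G, v_in_star. rewrite phi_inv_eq, psi_inv_eq by (auto; lra). unfold Phi in Hs.
  assert (HB : 0 < a * bet p * gam p) by (repeat apply Rmult_lt_0_compat; lra).
  set (B := a * bet p * gam p) in *.
  set (X := k_s p * d / ((1 - a) * phi_max p - d)) in *.
  set (Y := Kp p * d / (psi_max p - d)) in *.
  assert (Y / B < s_in p - X) by lra.
  apply (Rmult_lt_compat_l B) in H; [|lra].
  replace (B * (Y / B)) with Y in H by (field; lra). nra.
Qed.

Lemma ln_f0 p a d : params_pos p -> in_U p a d ->
  ln (f0_star p a d) = ln d + ln (mu_max p - d) + ln (G p a d) - ln (q_min p * mu_max p).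
Proof.
  intros Hp HU. pose proof (G_pos p a d Hp HU) as HG. pose proof (psi_max_lt p Hp).
  pose proof HU as HU'. apply in_U_iff in HU'; auto. destruct HU' as (Ha&Hd&H1&H2&Hs).
  pose proof Hp as (P1&P2&P3&P4&P5&P6&P7&P8&P9).
  assert (E : f0_star p a d = d * (mu_max p - d) * G p a d / (q_min p * mu_max p)).
  { unfold f0_star, mu_inv, G. field. repeat split; lra. }
  rewrite E, ln_div', !ln_mult; try lra.
  all: repeat apply Rmult_lt_0_compat; lra.
Qed.

Lemma Kp_pos p : params_pos p -> 0 < Kp p.
Proof. intros (P1&P2&P3&P4&P5&P6&P7&P8&P9). unfold Kp.
  apply Rdiv_lt_0_compat. repeat apply Rmult_lt_0_compat; lra.
  pose proof (Rmult_lt_0_compat _ _ P8 P9); lra. Qed.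

Lemma slice_d p a x y t : params_pos p -> in_U p a x -> in_U p a y -> 0 <= t <= 1 ->
  in_U p a (t*x+(1-t)*y).
Proof.
  intros Hp Hx Hy Ht. apply in_U_iff in Hx, Hy; auto. apply in_U_iff; auto.
  destruct Hx as (Ha&Hx1&Hx2&Hx3&Hx4). destruct Hy as (_&Hy1&Hy2&Hy3&Hy4).
  pose proof Hp as (P1&P2&P3&P4&P5&P6&P7&P8&P9). pose proof (Kp_pos p Hp). pose proof (psi_max_lt p Hp).
  repeat split; try lra. apply mix_pos; lra. apply mix_lt; lra. apply mix_lt; lra.
  assert (HB : 0 < a * bet p * gam p) by (repeat apply Rmult_lt_0_compat; lra).
  unfold Phi in *.
  pose proof (cvx_frac (k_s p) ((1-a)*phi_max p) x y t ltac:(lra) ltac:(nra) Hx2 Hy2 Ht).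
  pose proof (cvx_frac (Kp p / (a * bet p * gam p)) (psi_max p) x y t
     ltac:(left; apply Rdiv_lt_0_compat; lra) ltac:(lra) Hx3 Hy3 Ht).
  assert (forall z, Kp p * z / (psi_max p - z) / (a * bet p * gam p) =
                    Kp p / (a * bet p * gam p) * z / (psi_max p - z)).
  { intros; unfold Rdiv; ring. }
  rewrite !H3 in *.
  apply Rle_lt_trans with (1 := Rplus_le_compat _ _ _ _ H1 H2).
  set (F := fun z => k_s p * z / ((1 - a) * phi_max p - z) + Kp p / (a * bet p * gam p) * z / (psi_max p - z)).
  pose proof (mix_lt (F x) (F y) (s_in p) t Hx4 Hy4 Ht). unfold F in H4. lra.
Qed.

Lemma slice_a p d x y t : params_pos p -> in_U p x d -> in_U p y d -> 0 <= t <= 1 ->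
  in_U p (t*x+(1-t)*y) d.
Proof.
  intros Hp Hx Hy Ht. apply in_U_iff in Hx, Hy; auto. apply in_U_iff; auto.
  destruct Hx as (Ha&Hx1&Hx2&Hx3&Hx4). destruct Hy as (Hb&Hy1&Hy2&Hy3&Hy4).
  pose proof Hp as (P1&P2&P3&P4&P5&P6&P7&P8&P9). pose proof (Kp_pos p Hp). pose proof (psi_max_lt p Hp).
  assert (Hz : (1 - (t*x+(1-t)*y)) * phi_max p - d = t*((1-x)*phi_max p - d) + (1-t)*((1-y)*phi_max p - d)) by ring.
  assert (Hw : (t*x+(1-t)*y) * bet p * gam p = t*(x*bet p*gam p) + (1-t)*(y*bet p*gam p)) by ring.
  repeat split; try lra. apply mix_pos; lra. apply mix_lt; lra.
  assert (0 < (1 - (t*x+(1-t)*y)) * phi_max p - d) by (rewrite Hz; apply mix_pos; lra). lra.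
  unfold Phi in *. rewrite Hz, Hw.
  pose proof (cvx_inv (k_s p * d) ((1-x)*phi_max p - d) ((1-y)*phi_max p - d) t ltac:(nra) ltac:(lra) ltac:(lra) Ht).
  assert (HK : 0 <= Kp p * d / (psi_max p - d)) by (left; apply Rdiv_lt_0_compat; nra).
  pose proof (cvx_inv (Kp p * d / (psi_max p - d)) (x*bet p*gam p) (y*bet p*gam p) t HK
     ltac:(repeat apply Rmult_lt_0_compat; lra) ltac:(repeat apply Rmult_lt_0_compat; lra) Ht).
  apply Rle_lt_trans with (1 := Rplus_le_compat _ _ _ _ H1 H2).
  pose proof (mix_lt _ _ (s_in p) t Hx4 Hy4 Ht). lra.
Qed.

Lemma conc_d p a x y t : params_pos p -> in_U p a x -> in_U p a y -> x <> y -> 0 < t < 1 ->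
  t * ln (f0_star p a x) + (1-t) * ln (f0_star p a y) < ln (f0_star p a (t*x+(1-t)*y)).
Proof.
  intros Hp Hx Hy Hxy Ht.
  assert (Hm : in_U p a (t*x+(1-t)*y)) by (apply slice_d; auto; lra).
  rewrite !ln_f0 by auto.
  pose proof (G_pos p a x Hp Hx). pose proof (G_pos p a y Hp Hy). pose proof (G_pos p a _ Hp Hm).
  assert (HGc : t * G p a x + (1-t) * G p a y <= G p a (t*x+(1-t)*y)).
  { rewrite !G_eq by auto.
    apply in_U_iff in Hx, Hy; auto. destruct Hx as (Ha&Hx1&Hx2&Hx3&Hx4). destruct Hy as (_&Hy1&Hy2&Hy3&Hy4).
    pose proof Hp as (P1&P2&P3&P4&P5&P6&P7&P8&P9). pose proof (Kp_pos p Hp).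
    pose proof (cvx_frac (a*bet p*gam p*k_s p) ((1-a)*phi_max p) x y t
       ltac:(left; repeat apply Rmult_lt_0_compat; lra) ltac:(nra) Hx2 Hy2 ltac:(lra)).
    pose proof (cvx_frac (Kp p) (psi_max p) x y t ltac:(lra) ltac:(lra) Hx3 Hy3 ltac:(lra)).
    unfold Rdiv in *. lra. }
  pose proof (psi_max_lt p Hp).
  apply in_U_iff in Hx, Hy; auto. destruct Hx as (Ha&Hx1&Hx2&Hx3&Hx4). destruct Hy as (_&Hy1&Hy2&Hy3&Hy4).
  pose proof (ln_scc x y t Hx1 Hy1 Hxy Ht).
  pose proof (ln_cc (mu_max p - x) (mu_max p - y) t ltac:(lra) ltac:(lra) ltac:(lra)).
  replace (t * (mu_max p - x) + (1 - t) * (mu_max p - y)) with (mu_max p - (t*x+(1-t)*y)) in H4 by ring.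
  pose proof (ln_cc (G p a x) (G p a y) t H H0 ltac:(lra)).
  pose proof (ln_le' _ _ (mix_pos _ _ t H H0 ltac:(lra)) HGc).
  lra.
Qed.

Lemma conc_a p d x y t : params_pos p -> in_U p x d -> in_U p y d -> x <> y -> 0 < t < 1 ->
  t * ln (f0_star p x d) + (1-t) * ln (f0_star p y d) < ln (f0_star p (t*x+(1-t)*y) d).
Proof.
  intros Hp Hx Hy Hxy Ht.
  assert (Hm : in_U p (t*x+(1-t)*y) d) by (apply slice_a; auto; lra).
  rewrite !ln_f0 by auto.
  pose proof (G_pos p x d Hp Hx). pose proof (G_pos p y d Hp Hy). pose proof (G_pos p _ d Hp Hm).
  assert (HGc : t * G p x d + (1-t) * G p y d < G p (t*x+(1-t)*y) d).
  { rewrite !G_eq by auto.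
    apply in_U_iff in Hx, Hy; auto. destruct Hx as (Ha&Hx1&Hx2&Hx3&Hx4). destruct Hy as (Hb&Hy1&Hy2&Hy3&Hy4).
    pose proof Hp as (P1&P2&P3&P4&P5&P6&P7&P8&P9).
    pose proof (scvx_q (phi_max p) d x y t P4 ltac:(nra) ltac:(lra) ltac:(lra) Hxy Ht).
    assert (HC : 0 < bet p * gam p * k_s p * d) by (repeat apply Rmult_lt_0_compat; lra).
    apply (Rmult_lt_compat_l _ _ _ HC) in H2. lra. }
  pose proof (ln_cc (G p x d) (G p y d) t H H0 ltac:(lra)).
  pose proof (ln_increasing _ _ (mix_pos _ _ t H H0 ltac:(lra)) HGc).
  lra.
Qed.

Lemma f0_pos p a d : params_pos p -> in_U p a d -> 0 < f0_star p a d.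
Proof.
  intros Hp HU. pose proof (G_pos p a d Hp HU) as HG. pose proof (psi_max_lt p Hp).
  pose proof HU as HU'. apply in_U_iff in HU'; auto. destruct HU' as (Ha&Hd&H1&H2&Hs).
  pose proof Hp as (P1&P2&P3&P4&P5&P6&P7&P8&P9).
  assert (E : f0_star p a d = d * (mu_max p - d) * G p a d / (q_min p * mu_max p)).
  { unfold f0_star, mu_inv, G. field. repeat split; lra. }
  rewrite E. apply Rdiv_lt_0_compat; repeat apply Rmult_lt_0_compat; lra.
Qed.

Theorem proposition1 (p : params) (Hp : params_pos p) :
  (* biconvexity of U *)
  (forall a : R, convex_set (fun d => in_U p a d)) /\
  (forall d : R, convex_set (fun a => in_U p a d)) /\
  (* positivity of f0^* on U *)
  (forall a d : R, in_U p a d -> 0 < f0_star p a d) /\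
  (* strict biconcavity of ln f0^* on U *)
  (forall a : R, strictly_concave_on (fun d => in_U p a d) (fun d => ln (f0_star p a d))) /\
  (forall d : R, strictly_concave_on (fun a => in_U p a d) (fun a => ln (f0_star p a d))).
Proof.
  split; [|split; [|split; [|split]]].
  - intros a x y t Hx Hy Ht. apply slice_d; auto.
  - intros d x y t Hx Hy Ht. apply slice_a; auto.
  - intros a d. apply f0_pos; auto.
  - intros a x y t Hx Hy Hxy Ht. apply conc_d; auto.
  - intros d x y t Hx Hy Hxy Ht. apply conc_a; auto.
Qed.
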